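(* Let $Y$ be a (closed) hyperplane in $c_0$. Then $Y$ has property-$(HB)$ in $c_0$ if and only if $Y$ is an $M$-summand in $c_0$.
   Context: $c_0$ is the space of real null sequences with the sup norm; $c_0^*=\ell_1$. For a closed subspace $Y$ of $X$, $Y^\perp=\{x^*\in X^*:x^*|_Y=0\}$. $Y$ has property-$(HB)$ in $X$ if there is a linear projection $P$ on $X^*$ with range $Y^\perp$ and $\|P\|=1$ such that, writing $G=(I-P)(X^* )$, for every $x^*=y^\#+y^\perp$ with $y^\#\in G$, $0\ne y^\perp\in Y^\perp$, one has $\|x^*\|>\|y^\#\|$ and $\|x^*\|\ge\|y^\perp\|$. $Y$ is an $M$-summand in $X$ if there is a closed subspace $W$ with $X=Y\oplus W$ and $\|y+w\|=\max\{\|y\|,\|w\|\}$ for all $y\in Y,w\in W$. *)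

(* Defs.v *)
From Stdlib Require Import Reals.
From Coquelicot Require Import Coquelicot.
Open Scope R_scope.

Definition seqR := nat -> R.
Definition sadd (x y : seqR) : seqR := fun n => x n + y n.
Definition sscal (a : R) (x : seqR) : seqR := fun n => a * x n.
Definition szero : seqR := fun _ => 0.

Definition c0 (x : seqR) : Prop := is_lim_seq x 0.
Definition c0norm (x : seqR) : R :=
  real (Lub_Rbar (fun r => exists n, r = Rabs (x n))).

(* c_0^* = l_1, acting by <f, x> = sum_n f n * x n, with the l_1 norm
   (the dual norm). *)
Definition l1 (f : seqR) : Prop := ex_series (fun n => Rabs (f n)).
Definition l1norm (f : seqR) : R := Series (fun n => Rabs (f n)).
Definition pairing (f x : seqR) : R := Series (fun n => f n * x n).

Definition closed_subspace_c0 (Y : seqR -> Prop) : Prop :=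
  (forall y, Y y -> c0 y) /\
  Y szero /\
  (forall y z, Y y -> Y z -> Y (sadd y z)) /\
  (forall a y, Y y -> Y (sscal a y)) /\
  (forall x, c0 x ->
     (forall eps, 0 < eps -> exists y, Y y /\ c0norm (sadd x (sscal (-1) y)) < eps) ->
     Y x).

Definition hyperplane_c0 (Y : seqR -> Prop) : Prop :=
  closed_subspace_c0 Y /\
  exists x0, c0 x0 /\ ~ Y x0 /\
    forall x, c0 x -> exists y t, Y y /\ x = sadd y (sscal t x0).

Definition annih (Y : seqR -> Prop) (f : seqR) : Prop :=
  l1 f /\ forall y, Y y -> pairing f y = 0.

Definition property_HB_c0 (Y : seqR -> Prop) : Prop :=
  exists P : seqR -> seqR,
    (forall f, l1 f -> l1 (P f)) /\
    (forall a b f g, l1 f -> l1 g ->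
        P (sadd (sscal a f) (sscal b g)) = sadd (sscal a (P f)) (sscal b (P g))) /\
    (forall f, l1 f -> P (P f) = P f) /\
    (forall f, l1 f -> annih Y (P f)) /\
    (forall g, annih Y g -> exists f, l1 f /\ P f = g) /\
    (forall f, l1 f -> l1norm (P f) <= l1norm f) /\
    (forall c, c < 1 -> exists f, l1 f /\ l1norm (P f) > c * l1norm f) /\
    (forall g h,
        (exists f, l1 f /\ g = sadd f (sscal (-1) (P f))) ->
        annih Y h -> h <> szero ->
        l1norm (sadd g h) > l1norm g /\ l1norm (sadd g h) >= l1norm h).

Definition M_summand_c0 (Y : seqR -> Prop) : Prop :=
  exists W : seqR -> Prop,
    closed_subspace_c0 W /\
    (forall x, Y x -> W x -> x = szero) /\
    (forall x, c0 x -> exists y w, Y y /\ W w /\ x = sadd y w) /\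
    (forall y w, Y y -> W w -> c0norm (sadd y w) = Rmax (c0norm y) (c0norm w)).

(* Main.v *)
Require Import Defs.
From Stdlib Require Import Reals Lra Lia Classical FunctionalExtensionality PropExtensionality.
From Coquelicot Require Import Coquelicot.
Open Scope R_scope.

Definition single (i : nat) (c : R) : seqR := fun n => if Nat.eq_dec n i then c else 0.

Lemma sum_single i c n : sum_n (single i c) n = if Compare_dec.le_dec i n then c else 0.
Proof.
  induction n.
  - rewrite sum_O. unfold single. destruct (Nat.eq_dec 0 i); destruct (Compare_dec.le_dec i 0); try lia; auto.
  - rewrite sum_Sn, IHn. unfold single. change plus with Rplus.
    destruct (Nat.eq_dec (S n) i); destruct (Compare_dec.le_dec i n); destruct (Compare_dec.le_dec i (S n)); try lia; lra.
Qed.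

Lemma is_series_single i c : is_series (single i c) c.
Proof.
  change (is_lim_seq (sum_n (single i c)) c).
  apply is_lim_seq_ext_loc with (fun _ => c).
  - exists i. intros n Hn. rewrite sum_single. destruct (Compare_dec.le_dec i n); [auto|lia].
  - apply is_lim_seq_const.
Qed.

Lemma Series_single i c : Series (single i c) = c.
Proof. apply is_series_unique, is_series_single. Qed.

Lemma ex_series_single i c : ex_series (single i c).
Proof. eexists; apply is_series_single. Qed.

Lemma Rabs_single i c n : Rabs (single i c n) = single i (Rabs c) n.
Proof. unfold single; destruct (Nat.eq_dec n i); auto using Rabs_R0. Qed.

Lemma l1_single i c : l1 (single i c).
Proof. unfold l1. eapply ex_series_ext. intro n; symmetry; apply Rabs_single. apply ex_series_single. Qed.

Lemma l1norm_single i c : l1norm (single i c) = Rabs c.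
Proof. unfold l1norm. rewrite (Series_ext _ (single i (Rabs c))). apply Series_single. apply Rabs_single. Qed.

Lemma l1_term f i : l1 f -> Rabs (f i) <= l1norm f.
Proof.
  intro H. unfold l1norm. rewrite <- (Series_single i (Rabs (f i))).
  apply Series_le; auto. intro n; unfold single; destruct (Nat.eq_dec n i); subst; split; auto using Rabs_pos; lra.
Qed.

Lemma l1norm_nonneg f : l1 f -> 0 <= l1norm f.
Proof. intro H. eapply Rle_trans; [apply Rabs_pos| apply (l1_term f 0 H)]. Qed.

Lemma pairing_single f i c : pairing f (single i c) = f i * c.
Proof.
  unfold pairing. rewrite (Series_ext _ (single i (f i * c))). apply Series_single.
  intro n; unfold single; destruct (Nat.eq_dec n i); subst; ring.
Qed.

Lemma pairing_single_l f i c : pairing (single i c) f = c * f i.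
Proof.
  unfold pairing. rewrite (Series_ext _ (single i (c * f i))). apply Series_single.
  intro n; unfold single; destruct (Nat.eq_dec n i); subst; ring.
Qed.

Lemma c0_single i c : c0 (single i c).
Proof.
  unfold c0. apply is_lim_seq_ext_loc with (fun _ => 0).
  exists (S i). intros n Hn. unfold single; destruct (Nat.eq_dec n i); [lia|auto].
  apply is_lim_seq_const.
Qed.

Lemma c0_eventually x : c0 x -> exists N, forall n, (N <= n)%nat -> Rabs (x n) <= 1.
Proof.
  intro H. apply is_lim_seq_spec in H. destruct (H (mkposreal 1 Rlt_0_1)) as [N HN].
  exists N; intros n Hn. specialize (HN n Hn). simpl in HN. rewrite Rminus_0_r in HN. lra.
Qed.

Lemma ex_series_prod f x : l1 f -> c0 x -> ex_series (fun n => f n * x n).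
Proof.
  intros Hf Hx. destruct (c0_eventually x Hx) as [N HN].
  apply (ex_series_incr_n _ N).
  apply (@ex_series_le R_AbsRing R_CompleteNormedModule) with (fun k => Rabs (f (N + k)%nat)).
  - intro k. change norm with Rabs. rewrite Rabs_mult.
    rewrite <- (Rmult_1_r (Rabs (f (N+k)%nat))) at 2.
    apply Rmult_le_compat_l; auto using Rabs_pos. apply HN; lia.
  - apply (ex_series_incr_n (fun n => Rabs (f n)) N). exact Hf.
Qed.
Lemma pairing_lin_r f x y t : l1 f -> c0 x -> c0 y ->
  pairing f (sadd x (sscal t y)) = pairing f x + t * pairing f y.
Proof.
  intros Hf Hx Hy. unfold pairing, sadd, sscal.
  rewrite <- Series_scal_l, <- Series_plus.
  - apply Series_ext; intro n; ring.
  - apply ex_series_prod; auto.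
  - apply (ex_series_scal_l t (fun n => f n * y n)). apply ex_series_prod; auto.
Qed.

Lemma pairing_lin_l f g a x : l1 f -> l1 g -> c0 x ->
  pairing (sadd f (sscal a g)) x = pairing f x + a * pairing g x.
Proof.
  intros Hf Hg Hx. unfold pairing, sadd, sscal.
  rewrite <- Series_scal_l, <- Series_plus.
  - apply Series_ext; intro n; ring.
  - apply ex_series_prod; auto.
  - apply (ex_series_scal_l a (fun n => g n * x n)). apply ex_series_prod; auto.
Qed.

Lemma l1_lin f g a : l1 f -> l1 g -> l1 (sadd f (sscal a g)).
Proof.
  intros Hf Hg. unfold l1, sadd, sscal.
  apply (@ex_series_le R_AbsRing R_CompleteNormedModule) with (fun n => Rabs (f n) + Rabs a * Rabs (g n)).
  - intro n. change norm with Rabs. rewrite Rabs_Rabsolu.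
    eapply Rle_trans; [apply Rabs_triang|]. rewrite Rabs_mult; lra.
  - apply (ex_series_plus (fun n => Rabs (f n)) (fun n => Rabs a * Rabs (g n))); auto.
    apply (ex_series_scal_l (Rabs a) (fun n => Rabs (g n))); auto.
Qed.

Lemma c0_lin x y t : c0 x -> c0 y -> c0 (sadd x (sscal t y)).
Proof.
  intros Hx Hy. unfold c0, sadd, sscal.
  assert (Hs : is_lim_seq (fun n => t * y n) (t*0)).
  { pose proof (is_lim_seq_scal_l y t 0 Hy) as K; simpl in K; exact K. }
  pose proof (is_lim_seq_plus' _ _ _ _ Hx Hs) as K. replace (0 + t*0) with 0 in K by ring. exact K.
Qed.

Definition bounded (x : seqR) := exists M, forall n, Rabs (x n) <= M.

Lemma fin_bound (x : seqR) N : exists M, forall n, (n <= N)%nat -> Rabs (x n) <= M.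
Proof.
  induction N.
  - exists (Rabs (x 0%nat)). intros n Hn. replace n with 0%nat by lia. lra.
  - destruct IHN as [M HM]. exists (Rmax M (Rabs (x (S N)))). intros n Hn.
    destruct (Nat.eq_dec n (S N)). subst; apply Rmax_r.
    eapply Rle_trans; [apply HM; lia| apply Rmax_l].
Qed.

Lemma c0_bounded x : c0 x -> bounded x.
Proof.
  intro H. destruct (c0_eventually x H) as [N HN]. destruct (fin_bound x N) as [M HM].
  exists (Rmax M 1). intro n. destruct (Compare_dec.le_dec n N).
  eapply Rle_trans; [apply HM; lia| apply Rmax_l].
  eapply Rle_trans; [apply HN; lia| apply Rmax_r].
Qed.

Lemma c0norm_spec x M : (forall n, Rabs (x n) <= M) ->
  (forall n, Rabs (x n) <= c0norm x) /\ c0norm x <= M.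
Proof.
  intro HM. unfold c0norm.
  destruct (Lub_Rbar_correct (fun r => exists n, r = Rabs (x n))) as [Hub Hl].
  assert (HMub : is_ub_Rbar (fun r => exists n, r = Rabs (x n)) M).
  { intros r [n ->]. simpl. apply HM. }
  specialize (Hl _ HMub).
  assert (H0 := Hub (Rabs (x 0%nat)) (ex_intro _ 0%nat eq_refl)).
  destruct (Lub_Rbar _) as [l| |]; simpl in *; try contradiction.
  split; auto. intro n. apply (Hub (Rabs (x n))). eauto.
Qed.

Lemma c0norm_ge x n : bounded x -> Rabs (x n) <= c0norm x.
Proof. intros [M HM]. apply (c0norm_spec x M HM). Qed.

Lemma c0norm_le x M : (forall n, Rabs (x n) <= M) -> c0norm x <= M.
Proof. intro HM. apply (c0norm_spec x M HM). Qed.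

Lemma argmax (x : seqR) N : exists i, (i <= N)%nat /\ forall n, (n <= N)%nat -> Rabs (x n) <= Rabs (x i).
Proof.
  induction N.
  - exists 0%nat. split; auto. intros n Hn. replace n with 0%nat by lia. lra.
  - destruct IHN as [i [Hi HM]].
    destruct (Rle_dec (Rabs (x i)) (Rabs (x (S N)))) as [Hle|Hnle].
    + exists (S N). split; auto. intros n Hn. destruct (Nat.eq_dec n (S N)). subst; lra.
      eapply Rle_trans; [apply HM; lia| auto].
    + exists i. split; [lia|]. intros n Hn. destruct (Nat.eq_dec n (S N)). subst; lra. apply HM; lia.
Qed.

Lemma c0_attain x k : c0 x -> x k <> 0 -> exists i, forall n, Rabs (x n) <= Rabs (x i).
Proof.
  intros H Hk. apply is_lim_seq_spec in H.
  assert (Hp : 0 < Rabs (x k)) by (apply Rabs_pos_lt; auto).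
  destruct (H (mkposreal _ Hp)) as [N HN].
  destruct (argmax x (max N k)) as [i [Hi HM]].
  exists i. intro n. destruct (Compare_dec.le_dec n (max N k)). auto.
  specialize (HN n ltac:(lia)). simpl in HN. rewrite Rminus_0_r in HN.
  assert (Rabs (x k) <= Rabs (x i)) by (apply HM; lia). lra.
Qed.
Definition Ei (i : nat) (x : seqR) : Prop := c0 x /\ x i = 0.

Lemma single_at i c : single i c i = c.
Proof. unfold single; destruct (Nat.eq_dec i i); congruence. Qed.

Lemma single_off i c n : n <> i -> single i c n = 0.
Proof. intro; unfold single; destruct (Nat.eq_dec n i); congruence. Qed.

Lemma hyp_eq Y i : hyperplane_c0 Y -> (forall x, Y x -> x i = 0) ->
  forall x, c0 x -> x i = 0 -> Y x.
Proof.
  intros [[HYc [HY0 [Hadd [Hsc Hcl]]]] [x0 [Hx0 [Hnx0 Hdec]]]] Hsub x Hx Hxi.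
  assert (Hx0i : x0 i <> 0).
  { destruct (Hdec (single i 1) (c0_single i 1)) as [y [t [Hy E]]].
    assert (E' := f_equal (fun f => f i) E). simpl in E'. unfold sadd, sscal in E'.
    rewrite single_at, (Hsub y Hy) in E'. intro Z; rewrite Z in E'; lra. }
  destruct (Hdec x Hx) as [y [t [Hy E]]].
  assert (E' := f_equal (fun f => f i) E). simpl in E'. unfold sadd, sscal in E'.
  rewrite (Hsub y Hy), Hxi in E'.
  assert (t = 0). { assert (K : t * x0 i = 0) by lra. apply Rmult_integral in K as [|]; [auto|]. contradiction. }
  replace x with y; auto. rewrite E. apply functional_extensionality; intro n. unfold sadd, sscal. subst t; ring.
Qed.
Lemma annih_Ei i g : annih (Ei i) g -> g = single i (g i).
Proof.
  intros [Hg HY]. apply functional_extensionality; intro n.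
  destruct (Nat.eq_dec n i). subst; rewrite single_at; auto.
  rewrite single_off by auto.
  assert (K := HY (single n 1) (conj (c0_single n 1) (single_off n 1 i (not_eq_sym n0)))).
  rewrite pairing_single in K. lra.
Qed.

Lemma l1norm_add_single g i c : l1 g -> g i = 0 ->
  l1norm (sadd g (single i c)) = l1norm g + Rabs c.
Proof.
  intros Hg Hgi. unfold l1norm, sadd.
  rewrite (Series_ext _ (fun n => Rabs (g n) + single i (Rabs c) n)).
  rewrite Series_plus; [rewrite Series_single; ring | exact Hg | apply ex_series_single].
  intro n. unfold single. destruct (Nat.eq_dec n i). subst; rewrite Hgi, Rplus_0_l, Rabs_R0; ring.
  rewrite !Rplus_0_r; auto.
Qed.

Lemma A_HB i : property_HB_c0 (Ei i).
Proof.
  exists (fun f => single i (f i)).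
  split; [intros; apply l1_single|].
  split. { intros. apply functional_extensionality; intro n. unfold single, sadd, sscal.
           destruct (Nat.eq_dec n i); destruct (Nat.eq_dec i i); try congruence; ring. }
  split. { intros; rewrite single_at; auto. }
  split. { intros f Hf. split. apply l1_single. intros y [_ Hy]. rewrite pairing_single_l, Hy; ring. }
  split. { intros g Hg. exists g. split. apply Hg. symmetry; apply annih_Ei; auto. }
  split. { intros f Hf. rewrite l1norm_single. apply l1_term; auto. }
  split. { intros c Hc. exists (single i 1). split. apply l1_single. rewrite single_at, l1norm_single, Rabs_R1. lra. }
  intros g h [f [Hf ->]] Hh Hh0.
  rewrite (annih_Ei i h Hh) in *.
  assert (Hhi : h i <> 0). { intro Z. apply Hh0. rewrite Z. apply functional_extensionality; intro n.
     unfold single, szero; destruct (Nat.eq_dec n i); auto. }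
  assert (Hl : l1 (sadd f (sscal (-1) (single i (f i))))) by (apply l1_lin; auto; apply l1_single).
  assert (Hgi : sadd f (sscal (-1) (single i (f i))) i = 0) by (unfold sadd, sscal; rewrite single_at; ring).
  rewrite l1norm_add_single; auto. rewrite l1norm_single.
  assert (0 < Rabs (h i)) by (apply Rabs_pos_lt; auto).
  assert (0 <= l1norm (sadd f (sscal (-1) (single i (f i))))) by (apply l1norm_nonneg; auto).
  split; lra.
Qed.

Lemma bounded_sadd x y : bounded x -> bounded y -> bounded (sadd x y).
Proof.
  intros [M1 H1] [M2 H2]. exists (M1 + M2). intro n. unfold sadd.
  eapply Rle_trans; [apply Rabs_triang|]. specialize (H1 n); specialize (H2 n); lra.
Qed.

Lemma A_M i : M_summand_c0 (Ei i).
Proof.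
  exists (fun x => exists t, x = single i t).
  split; [|split; [|split]].
  - split; [intros y [t ->]; apply c0_single|].
    split. { exists 0. apply functional_extensionality; intro n; unfold single, szero; destruct (Nat.eq_dec n i); auto. }
    split. { intros y z [t1 ->] [t2 ->]. exists (t1 + t2). apply functional_extensionality; intro n;
             unfold single, sadd; destruct (Nat.eq_dec n i); ring. }
    split. { intros a y [t ->]. exists (a * t). apply functional_extensionality; intro n;
             unfold single, sscal; destruct (Nat.eq_dec n i); ring. }
    intros x Hx Happ. exists (x i). apply functional_extensionality; intro n.
    destruct (Nat.eq_dec n i). subst; rewrite single_at; auto.
    rewrite single_off by auto.
    destruct (Req_dec (x n) 0) as [|Hxn]; auto. exfalso.
    destruct (Happ (Rabs (x n)) (Rabs_pos_lt _ Hxn)) as [y [[t ->] Hlt]].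
    assert (Hb : bounded (sadd x (sscal (-1) (single i t)))) by (apply c0_bounded, c0_lin; auto; apply c0_single).
    assert (K := c0norm_ge _ n Hb).
    assert (E : sadd x (sscal (-1) (single i t)) n = x n) by (unfold sadd, sscal; rewrite single_off by auto; ring).
    rewrite E in K. lra.
  - intros x [_ Hxi] [t ->]. rewrite single_at in Hxi. subst.
    apply functional_extensionality; intro n; unfold single, szero; destruct (Nat.eq_dec n i); auto.
  - intros x Hx. exists (fun n => if Nat.eq_dec n i then 0 else x n), (single i (x i)).
    split; [split|split].
    + unfold c0. apply is_lim_seq_ext_loc with x; auto. exists (S i). intros n Hn.
      destruct (Nat.eq_dec n i); [lia|auto].
    + destruct (Nat.eq_dec i i); congruence.
    + eauto.
    + apply functional_extensionality; intro n. unfold sadd, single. destruct (Nat.eq_dec n i); subst; ring.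
  - intros y w [Hy Hyi] [t ->].
    assert (Hbw : bounded (single i t)) by (apply c0_bounded, c0_single).
    assert (Hby : bounded y) by (apply c0_bounded; auto).
    assert (Hbz : bounded (sadd y (single i t))) by (apply bounded_sadd; auto).
    assert (Hw : c0norm (single i t) = Rabs t).
    { apply Rle_antisym. apply c0norm_le. intro n; unfold single; destruct (Nat.eq_dec n i); rewrite ?Rabs_R0; auto using Rabs_pos; lra.
      rewrite <- (single_at i t) at 1. apply c0norm_ge; auto. }
    rewrite Hw.
    assert (Hzi : sadd y (single i t) i = t) by (unfold sadd; rewrite single_at, Hyi; ring).
    apply Rle_antisym.
    + apply c0norm_le. intro n. destruct (Nat.eq_dec n i). subst; rewrite Hzi; apply Rmax_r.
      unfold sadd; rewrite single_off, Rplus_0_r by auto.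
      eapply Rle_trans; [apply c0norm_ge; auto| apply Rmax_l].
    + apply Rmax_lub.
      * apply c0norm_le. intro n. destruct (Nat.eq_dec n i). subst; rewrite Hyi, Rabs_R0.
        eapply Rle_trans; [apply Rabs_pos| apply (c0norm_ge _ i Hbz)].
        eapply Rle_trans; [|apply (c0norm_ge _ n Hbz)]. unfold sadd; rewrite single_off, Rplus_0_r by auto; lra.
      * rewrite <- Hzi at 1. apply c0norm_ge; auto.
Qed.
Lemma C_dir Y : hyperplane_c0 Y -> M_summand_c0 Y -> exists i, forall x, Y x -> x i = 0.
Proof.
  intros [[HYc [HY0 [Hadd [Hsc Hcl]]]] [x0 [Hx0 [Hnx0 Hdec]]]]
         [W [[HWc [HW0 [HWadd [HWsc _]]]] [Hint [Hdecw Hnorm]]]].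
  destruct (Hdecw x0 Hx0) as [y0 [w [Hy0 [Hw E0]]]].
  destruct (classic (exists k, w k <> 0)) as [[k Hk]|Hn].
  2:{ exfalso. apply Hnx0. replace x0 with y0; auto. rewrite E0. apply functional_extensionality; intro n.
      unfold sadd. destruct (Req_dec (w n) 0) as [->|H]. ring. exfalso; eauto. }
  assert (Hwc : c0 w) by auto.
  destruct (c0_attain w k Hwc Hk) as [i Hi].
  exists i. intros y Hy. destruct (Req_dec (y i) 0) as [|Hyi]; auto. exfalso.
  assert (Hbw := c0_bounded w Hwc). assert (Hby := c0_bounded y (HYc y Hy)).
  assert (Hwi : 0 < Rabs (w i)) by (specialize (Hi k); assert (0 < Rabs (w k)) by (apply Rabs_pos_lt; auto); lra).
  assert (Mw : c0norm w = Rabs (w i)).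
  { apply Rle_antisym. apply c0norm_le; auto. apply c0norm_ge; auto. }
  set (a := Rabs (y i)). set (C := c0norm y).
  assert (Ha : 0 < a) by (apply Rabs_pos_lt; auto).
  assert (HaC : a <= C) by (apply c0norm_ge; auto).
  set (s := w i * y i / (a * C)).
  assert (Hs : Rabs s * C = Rabs (w i)).
  { unfold s. rewrite Rabs_div by (apply Rgt_not_eq; apply Rmult_lt_0_compat; lra).
    rewrite Rabs_mult, (Rabs_pos_eq (a*C)) by (apply Rmult_le_pos; lra). fold a. field. split; lra. }
  assert (Hyy : y i * y i = a * a).
  { unfold a. rewrite <- Rabs_mult. rewrite Rabs_pos_eq; auto. apply Rle_0_sqr. }
  assert (K := Hnorm (sscal s y) w (Hsc s y Hy) Hw).
  assert (K1 : c0norm (sscal s y) <= Rabs (w i)).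
  { apply c0norm_le. intro n. unfold sscal. rewrite Rabs_mult, <- Hs.
    apply Rmult_le_compat_l. apply Rabs_pos. apply c0norm_ge; auto. }
  assert (Hbz : bounded (sadd (sscal s y) w)).
  { apply bounded_sadd; auto. destruct Hby as [M HM]. exists (Rabs s * M). intro n. unfold sscal.
    rewrite Rabs_mult. apply Rmult_le_compat_l; auto using Rabs_pos. }
  assert (K2 := c0norm_ge _ i Hbz).
  assert (Ez : sadd (sscal s y) w i = w i * (1 + a / C)).
  { unfold sadd, sscal, s. replace (w i * y i / (a * C) * y i) with (w i * (y i * y i) / (a * C)) by (field; split; lra).
    rewrite Hyy. field. split; lra. }
  rewrite Ez, Rabs_mult, (Rabs_pos_eq (1 + a/C)) in K2.
  2:{ assert (0 < a / C) by (apply Rdiv_lt_0_compat; lra). lra. }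
  assert (0 < a / C) by (apply Rdiv_lt_0_compat; lra).
  rewrite K, Mw in K2.
  assert (Rmax (c0norm (sscal s y)) (Rabs (w i)) <= Rabs (w i)) by (apply Rmax_lub; lra).
  assert (Rabs (w i) * (a / C) > 0) by (apply Rmult_lt_0_compat; lra).
  nra.
Qed.
Lemma l1_scal f a : l1 f -> l1 (sscal a f).
Proof.
  intro Hf. unfold l1, sscal. eapply ex_series_ext.
  intro n; symmetry; apply Rabs_mult.
  apply (ex_series_scal_l (Rabs a) (fun n => Rabs (f n))); auto.
Qed.

Lemma l1norm_scal f a : l1norm (sscal a f) = Rabs a * l1norm f.
Proof.
  unfold l1norm, sscal. rewrite <- Series_scal_l. apply Series_ext; intro n; apply Rabs_mult.
Qed.

Lemma core (Y : seqR -> Prop) (P : seqR -> seqR) phi p q a b np nq :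
  (forall a b f g, l1 f -> l1 g ->
        P (sadd (sscal a f) (sscal b g)) = sadd (sscal a (P f)) (sscal b (P g))) ->
  (forall f, l1 f -> l1norm (P f) <= l1norm f) ->
  (forall f, l1 f -> annih Y (P f)) ->
  (forall g h,
        (exists f, l1 f /\ g = sadd f (sscal (-1) (P f))) ->
        annih Y h -> h <> szero ->
        l1norm (sadd g h) > l1norm g /\ l1norm (sadd g h) >= l1norm h) ->
  l1 p -> l1 q -> phi = sadd p q -> P phi = phi -> (exists n, phi n <> 0) ->
  P p = sscal a phi -> P q = sscal b phi ->
  (forall al be, l1norm (sadd (sscal al p) (sscal be q)) = Rabs al * np + Rabs be * nq) ->
  0 < np -> np <= nq -> False.
Proof.
  intros Hlin Hnorm Hann Hhb Hp Hq Ephi HPphi [n0 Hn0] HPp HPq Hform Hnp Hle.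
  assert (E1 : phi = sadd (sscal 1 p) (sscal 1 q)).
  { rewrite Ephi; apply functional_extensionality; intro n; unfold sadd, sscal; ring. }
  assert (Nphi : l1norm phi = np + nq) by (rewrite E1, Hform, Rabs_R1; ring).
  assert (Np : l1norm p = np).
  { replace p with (sadd (sscal 1 p) (sscal 0 q)) at 1 by (apply functional_extensionality; intro n; unfold sadd, sscal; ring).
    rewrite Hform, Rabs_R1, Rabs_R0; ring. }
  assert (Nq : l1norm q = nq).
  { replace q with (sadd (sscal 0 p) (sscal 1 q)) at 1 by (apply functional_extensionality; intro n; unfold sadd, sscal; ring).
    rewrite Hform, Rabs_R1, Rabs_R0; ring. }
  assert (Ba := Hnorm p Hp). rewrite HPp, l1norm_scal, Nphi, Np in Ba.
  assert (Bb := Hnorm q Hq). rewrite HPq, l1norm_scal, Nphi, Nq in Bb.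
  assert (Hab : a + b = 1).
  { assert (L := Hlin 1 1 p q Hp Hq). rewrite <- E1, HPphi, HPp, HPq in L.
    assert (L' := f_equal (fun f => f n0) L). unfold sadd, sscal in L'; simpl in L'.
    apply (Rmult_eq_reg_r (phi n0)); auto. lra. }
  assert (Ra := Rle_abs a). assert (Rb := Rle_abs b).
  assert (HaN : a * (np + nq) = np) by nra.
  assert (Hapos : 0 < a) by nra.
  assert (Hh : annih Y (P p)) by (apply Hann; auto).
  assert (Hh0 : P p <> szero).
  { intro Z. rewrite HPp in Z. assert (Z' := f_equal (fun f => f n0) Z). unfold sscal, szero in Z'; simpl in Z'.
    apply Rmult_integral in Z' as [|]; lra. }
  destruct (Hhb (sadd p (sscal (-1) (P p))) (P p) (ex_intro _ p (conj Hp eq_refl)) Hh Hh0) as [K _].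
  replace (sadd (sadd p (sscal (-1) (P p))) (P p)) with p in K
    by (apply functional_extensionality; intro n; unfold sadd, sscal; ring).
  replace (sadd p (sscal (-1) (P p))) with (sadd (sscal (1 - a) p) (sscal (- a) q)) in K
    by (rewrite HPp, Ephi; apply functional_extensionality; intro n; unfold sadd, sscal; ring).
  rewrite Hform, Np, Rabs_Ropp, (Rabs_pos_eq a) in K by lra.
  assert (R1 := Rle_abs (1 - a)).
  assert (np <= Rabs (1 - a) * np + a * nq) by nra. lra.
Qed.
Lemma l1norm_szero : l1norm szero = 0.
Proof.
  replace szero with (single 0 0). rewrite l1norm_single; apply Rabs_R0.
  apply functional_extensionality; intro n; unfold single, szero; destruct (Nat.eq_dec n 0); auto.
Qed.

Lemma B_dir Y : hyperplane_c0 Y -> property_HB_c0 Y -> exists i, forall x, Y x -> x i = 0.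
Proof.
  intros HH [P [Hl1 [Hlin [Hidem [Hann [Hsurj [Hnorm [Hc Hhb]]]]]]]].
  destruct HH as [[HYc [HY0 [Hadd [Hsc Hcl]]]] [x0 [Hx0 [Hnx0 Hdec]]]].
  destruct (Hc 0 Rlt_0_1) as [f0 [Hf0 Hpos]].
  set (phi := P f0).
  assert (Hphi : annih Y phi) by (apply Hann; auto).
  assert (HPphi : P phi = phi) by (apply Hidem; auto).
  assert (Hnz : exists n, phi n <> 0).
  { apply NNPP; intro Hn. assert (phi = szero).
    { apply functional_extensionality; intro n. unfold szero. apply NNPP; intro; eauto. }
    fold phi in Hpos. rewrite H, l1norm_szero in Hpos. lra. }
  assert (Ann : forall g, annih Y g -> pairing g x0 = 0 -> forall n, g n = 0).
  { intros g [Hg HgY] Hgx0 n. destruct (Hdec (single n 1) (c0_single n 1)) as [y [t [Hy E]]].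
    assert (K : pairing g (single n 1) = 0).
    { rewrite E, pairing_lin_r; auto. rewrite HgY, Hgx0 by auto; ring. }
    rewrite pairing_single in K. lra. }
  assert (Hphix0 : pairing phi x0 <> 0).
  { intro Z. destruct Hnz as [n Hn]. apply Hn. eapply Ann; eauto. }
  assert (Span : forall g, annih Y g -> exists c, g = sscal c phi).
  { intros g [Hg HgY]. set (c := pairing g x0 / pairing phi x0). exists c.
    assert (Hd : annih Y (sadd g (sscal (- c) phi))).
    { split. apply l1_lin; auto. apply Hphi. intros y Hy. rewrite pairing_lin_l; auto.
      rewrite HgY, (proj2 Hphi) by auto; ring. apply Hphi. }
    assert (Hdx : pairing (sadd g (sscal (- c) phi)) x0 = 0).
    { rewrite pairing_lin_l; auto. unfold c; field; auto. apply Hphi. }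
    apply functional_extensionality; intro n. assert (K := Ann _ Hd Hdx n). unfold sadd, sscal in *. lra. }
  assert (Hphil1 : l1 phi) by apply Hphi.
  assert (Uniq : forall j k, phi j <> 0 -> phi k <> 0 -> j = k).
  { intros j k Hj Hk. destruct (Nat.eq_dec j k) as [|Hjk]; auto. exfalso.
    set (u := single j (phi j)). set (v := fun n => if Nat.eq_dec n j then 0 else phi n).
    assert (Hu : l1 u) by apply l1_single.
    assert (Ev : v = sadd phi (sscal (-1) u)).
    { apply functional_extensionality; intro n; unfold v, u, sadd, sscal, single. destruct (Nat.eq_dec n j); subst; ring. }
    assert (Hv : l1 v) by (rewrite Ev; apply l1_lin; auto).
    assert (Ephi : phi = sadd u v).
    { apply functional_extensionality; intro n; unfold v, u, sadd, single. destruct (Nat.eq_dec n j); subst; ring. }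
    assert (Form : forall al be, l1norm (sadd (sscal al u) (sscal be v)) = Rabs al * Rabs (phi j) + Rabs be * l1norm v).
    { intros al be. replace (sadd (sscal al u) (sscal be v)) with (sadd (sscal be v) (single j (al * phi j))).
      rewrite l1norm_add_single, l1norm_scal, Rabs_mult. ring. apply l1_scal; auto.
      unfold sscal, v. destruct (Nat.eq_dec j j); [ring|congruence].
      apply functional_extensionality; intro n; unfold v, u, sadd, sscal, single. destruct (Nat.eq_dec n j); subst; ring. }
    destruct (Span (P u) (Hann u Hu)) as [a Ha].
    destruct (Span (P v) (Hann v Hv)) as [b Hb].
    assert (Hvk : Rabs (phi k) <= l1norm v).
    { replace (phi k) with (v k) by (unfold v; destruct (Nat.eq_dec k j); congruence). apply l1_term; auto. }
    assert (Hpk : 0 < Rabs (phi k)) by (apply Rabs_pos_lt; auto).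
    assert (Hpj : 0 < Rabs (phi j)) by (apply Rabs_pos_lt; auto).
    destruct (Rle_dec (Rabs (phi j)) (l1norm v)) as [Hle|Hnle].
    - eapply (core Y P phi u v a b); eauto.
    - eapply (core Y P phi v u b a (l1norm v) (Rabs (phi j))); eauto.
      + rewrite Ephi; apply functional_extensionality; intro n; unfold sadd; ring.
      + intros al be. replace (sadd (sscal al v) (sscal be u)) with (sadd (sscal be u) (sscal al v)).
        rewrite Form; ring. apply functional_extensionality; intro n; unfold sadd; ring.
      + lra.
      + lra. }
  destruct Hnz as [i Hi]. exists i. intros x Hx.
  assert (Ephi : phi = single i (phi i)).
  { apply functional_extensionality; intro n. unfold single. destruct (Nat.eq_dec n i); subst; auto.
    destruct (Req_dec (phi n) 0); auto. exfalso. apply n0. apply Uniq; auto. }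
  assert (K := proj2 Hphi x Hx). rewrite Ephi, pairing_single_l in K.
  apply Rmult_integral in K as [|]; [contradiction|auto].
Qed.

Theorem corollary3p17 (Y : seqR -> Prop) :
  hyperplane_c0 Y -> (property_HB_c0 Y <-> M_summand_c0 Y).
Proof.
  intros HH.
  assert (Red : forall i, (forall x, Y x -> x i = 0) -> Y = Ei i).
  { intros i Hsub. apply functional_extensionality; intro x. apply propositional_extensionality.
    split. intro Hx. split. apply (proj1 (proj1 HH)); auto. auto.
    intros [Hx Hxi]. eapply hyp_eq; eauto. }
  split; intro H.
  - destruct (B_dir Y HH H) as [i Hi]. rewrite (Red i Hi). apply A_M.
  - destruct (C_dir Y HH H) as [i Hi]. rewrite (Red i Hi). apply A_HB.
Qed.
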